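(* Let $\mathbb F\in\{\mathbb R,\mathbb C\}$. Suppose the Lie algebra $\mathfrak g$ is contracted to the Lie algebra $\hat{\mathfrak g}$ by a contraction matrix $\hat U_\varepsilon$ whose entries are polynomials in $\varepsilon$, and $\hat{\mathfrak g}$ is contracted to the Lie algebra $\tilde{\mathfrak g}$ by a contraction matrix $\tilde U_\varepsilon$ whose entries are polynomials in $\varepsilon$ (both nonsingular for $\varepsilon\in(0,1]$). Then $\mathfrak g$ is contracted to $\tilde{\mathfrak g}$ by a contraction matrix whose entries are polynomials in the contraction parameter.
   Context: All algebras are structures on the same $n$-dimensional space, given by structure constants in a fixed basis. A continuous $U:(0,1]\to GL_n(\mathbb F)$ contracts the algebra with structure constants $c^k_{ij}$ to the algebra with structure constants $c'^{k'}_{i'j'}$ if $\lim_{\varepsilon\to0^+}(U_\varepsilon)^i_{i'}(U_\varepsilon)^j_{j'}(U^{-1}_\varepsilon)^{k'}_kc^k_{ij}=c'^{k'}_{i'j'}$ for all indices (summation over repeated indices). *)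

(* Defs.v *)
From HB Require Import structures.
From mathcomp Require Import all_boot all_order all_algebra.
From mathcomp Require Import complex.
From mathcomp Require Import reals.
Set Implicit Arguments. Unset Strict Implicit. Unset Printing Implicit Defensive.
Import Order.TTheory GRing.Theory Num.Theory.
Local Open Scope ring_scope.

(* Structure constants c i j k = c^k_{ij} of an n-dimensional algebra. *)
Definition sconst (F : Type) (n : nat) := 'I_n -> 'I_n -> 'I_n -> F.

Definition is_lie (F : numFieldType) (n : nat) (c : sconst F n) : Prop :=
  (forall i j k, c i j k = - c j i k) /\
  (forall i j k m,
     \sum_(l < n) (c i j l * c l k m + c j k l * c l i m + c k i l * c l j m) = 0).

Definition transform (F : numFieldType) (n : nat) (U : 'M[F]_n) (c : sconst F n)
  : sconst F n :=
  fun i' j' k' => \sum_(i < n) \sum_(j < n) \sum_(k < n)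
     U i i' * U j j' * invmx U k' k * c i j k.

Definition contracts_by (F : numFieldType) (n : nat) (U : F -> 'M[F]_n)
  (c c' : sconst F n) : Prop :=
  [/\ (forall eps : F, 0 < eps <= 1 -> U eps \in unitmx),
      (forall eps0 : F, 0 < eps0 <= 1 -> forall e : F, 0 < e ->
         exists2 d : F, 0 < d & forall eps : F, 0 < eps <= 1 -> `|eps - eps0| < d ->
           forall a b, `|U eps a b - U eps0 a b| < e) &
      (forall e : F, 0 < e -> exists2 d : F, 0 < d &
         forall eps : F, 0 < eps < d -> 0 < eps <= 1 ->
           forall i' j' k', `|transform (U eps) c i' j' k' - c' i' j' k'| < e)].

Definition poly_mx_eval (F : numFieldType) (n : nat) (P : 'M[{poly F}]_n) (eps : F)
  : 'M[F]_n := map_mx (fun p => p.[eps]) P.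

Definition poly_contracts (F : numFieldType) (n : nat) (c c' : sconst F n) : Prop :=
  exists P : 'M[{poly F}]_n, contracts_by (poly_mx_eval P) c c'.

Definition poly_contraction_transitive (F : numFieldType) : Prop :=
  forall (n : nat) (g gh gt : sconst F n),
    is_lie g -> is_lie gh -> is_lie gt ->
    poly_contracts g gh -> poly_contracts gh gt -> poly_contracts g gt.

(* Main.v *)
Require Import Defs.
From HB Require Import structures.
From mathcomp Require Import all_boot all_order all_algebra.
From mathcomp Require Import ring.
From mathcomp Require Import complex.
From mathcomp Require Import reals.
Set Implicit Arguments. Unset Strict Implicit. Unset Printing Implicit Defensive.
Import Order.TTheory GRing.Theory Num.Theory.
Local Open Scope ring_scope.

Section PolyAn.
Variable F : numFieldType.
Implicit Types p q h : {poly F}.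

Lemma poly_bound_lip p : exists M, 0 <= M /\
  (forall x : F, `|x| <= 1 -> `|p.[x]| <= M) /\
  (forall x y : F, `|x| <= 1 -> `|y| <= 1 -> `|p.[x] - p.[y]| <= M * `|x - y|).
Proof.
elim/poly_ind: p => [|p c [M [M0 [HM HL]]]].
  exists 0; split => //; split => [x _|x y _ _]; by rewrite !horner0 ?subr0 ?normr0 ?mul0r.
exists (M + M + `|c|); split; first by rewrite !addr_ge0.
split => [x Hx|x y Hx Hy]; rewrite !hornerMXaddC.
  apply: (le_trans (ler_normD _ _)); rewrite normrM.
  rewrite lerD2r; apply: (le_trans (y := M)); last by rewrite lerDl.
  have := ler_pM (normr_ge0 p.[x]) (normr_ge0 x) (HM x Hx) Hx.
  by rewrite mulr1.
have -> : p.[x] * x + c - (p.[y] * y + c) = (p.[x] - p.[y]) * x + p.[y] * (x - y).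
  by ring.
apply: (le_trans (ler_normD _ _)); rewrite !normrM.
apply: (le_trans (y := M * `|x - y| + M * `|x - y|)).
  apply: lerD.
    have := ler_pM (normr_ge0 _) (normr_ge0 x) (HL x y Hx Hy) Hx.
    by rewrite mulr1.
  by apply: ler_wpM2r => //; apply: HM.
by rewrite -mulrDl ler_wpM2r // lerDl.
Qed.


Lemma pos_min (a b : F) : 0 < a -> 0 < b -> exists2 d : F, 0 < d & d <= a /\ d <= b.
Proof.
move=> a0 b0; case: (real_leP (gtr0_real a0) (gtr0_real b0)) => ab.
  by exists a.
by exists b => //; split => //; apply: ltW.
Qed.

Lemma norm_near (a b t : F) : `|a - b| <= t -> `|b| - t <= `|a| /\ `|a| <= `|b| + t.
Proof.
move=> H; split.
  rewrite lerBlDr; apply: (le_trans (y := `|b - a| + `|a|)).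
    by have := ler_normD (b - a) a; rewrite subrK.
  by rewrite addrC lerD2l distrC.
apply: (le_trans (y := `|a - b| + `|b|)).
  by have := ler_normD (a - b) b; rewrite subrK.
by rewrite addrC lerD2l.
Qed.

Lemma near0 h : h.[0] != 0 -> exists2 d : F, 0 < d & forall x : F, 0 < x -> x < d ->
  `|h.[0]| / 2%:R <= `|h.[x]| /\ `|h.[x]| <= `|h.[0]| * 2%:R.
Proof.
move=> h0; have [M [M0 [_ HL]]] := poly_bound_lip h.
have h0p : 0 < `|h.[0]| by rewrite normr_gt0.
have M1 : 0 < M + 1 by rewrite ltr_wpDl.
have [d d0 [d1 d2]] := pos_min (ltr01 : (0:F) < 1)
   (divr_gt0 (divr_gt0 h0p (ltr0n _ 2)) M1).
exists d => // x x0 xd.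
have x1 : `|x| <= 1 by rewrite ger0_norm ?(ltW x0) //; apply: ltW; exact: lt_le_trans xd d1.
have H : `|h.[x] - h.[0]| <= M * x.
  by have := HL x 0 x1; rewrite normr0 ler01 subr0 (ger0_norm (ltW x0)); apply.
have Hb : `|h.[x] - h.[0]| <= `|h.[0]| / 2%:R.
  apply: (le_trans H); apply: (le_trans (y := (M + 1) * x)).
    by rewrite ler_wpM2r ?(ltW x0) // lerDl.
  rewrite mulrC -ler_pdivlMr //; apply: ltW; exact: (lt_le_trans xd).
have [Hl Hu] := norm_near Hb; split.
  apply: le_trans Hl; rewrite lerBrDr -mulrDr.
  have -> : (2%:R : F)^-1 + 2%:R^-1 = 1 :> F.
    by field.
  by rewrite mulr1.
apply: (le_trans Hu); rewrite mulr_natr mulr2n lerD2l.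
by rewrite ler_pdivrMr ?addr_gt0 ?ltr01 // ler_pMr // lerDl ler01.
Qed.


Lemma poly_decomp h : h != 0 -> exists m s, s.[0] != 0 /\ h = s * 'X^m.
Proof.
move=> h0; have [m [q Hq Eh]] := multiplicity_XsubC h 0.
exists m, q; split; last by rewrite Eh polyC0 subr0.
by move: Hq; rewrite h0 /= rootE.
Qed.

Lemma expr_le_x (x : F) k : 0 <= x -> x <= 1 -> (0 < k)%N -> x ^+ k <= x.
Proof.
move=> x0 x1; case: k => // k _; rewrite exprS.
have := ler_wpM2l x0 (exprn_ile1 k x0 x1); by rewrite mulr1.
Qed.

Lemma ratio_le (a b x : F) m r : 0 <= a -> 0 < b -> 0 < x -> x <= 1 -> (m <= r)%N ->
  a / b <= a * x ^+ m / (b * x ^+ r).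
Proof.
move=> a0 b0 x0 x1 mr.
have xm : 0 < x ^+ m by rewrite exprn_gt0.
have xk : 0 < x ^+ (r - m) by rewrite exprn_gt0.
have -> : a * x ^+ m / (b * x ^+ r) = a / (b * x ^+ (r - m)).
  rewrite -(subnKC mr) exprD subnKC //.
  rewrite (mulrC (x ^+ m)) mulrA -mulf_div divff ?mulr1 //.
  by rewrite gt_eqF.
rewrite ler_pdivlMr ?mulr_gt0 // mulrA divfK ?gt_eqF //.
by have := ler_wpM2l a0 (exprn_ile1 (r - m) (ltW x0) x1); rewrite mulr1.
Qed.

Lemma ratio_ge (a b x : F) m r : 0 <= a -> 0 < b -> 0 < x -> x <= 1 -> (r < m)%N ->
  a * x ^+ m / (b * x ^+ r) <= a / b * x.
Proof.
move=> a0 b0 x0 x1 mr.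
have xr : 0 < x ^+ r by rewrite exprn_gt0.
have -> : a * x ^+ m / (b * x ^+ r) = a / b * x ^+ (m - r).
  rewrite -{1}(subnKC (ltnW mr)) exprD.
  have hb : b != 0 by rewrite gt_eqF.
  have hx : x ^+ r != 0 by rewrite gt_eqF.
  by field; rewrite hb hx.
apply: ler_wpM2l; first by rewrite divr_ge0 // ltW.
by apply: expr_le_x => //; [exact: ltW | rewrite subn_gt0].
Qed.


Lemma norm_hX (s : {poly F}) m (x : F) : 0 <= x -> `|(s * 'X^m).[x]| = `|s.[x]| * x ^+ m.
Proof. by move=> x0; rewrite hornerM hornerXn normrM normrX (ger0_norm x0). Qed.

Lemma poly_lower D : D != 0 -> exists (p : nat) (c : F), 0 < c /\
  exists2 d : F, 0 < d & forall x : F, 0 < x -> x < d -> c * x ^+ p <= `|D.[x]|.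
Proof.
move=> /poly_decomp [p [s [s0 ->]]]; have [d d0 Hd] := near0 s0.
exists p, (`|s.[0]| / 2%:R); split; first by rewrite divr_gt0 ?normr_gt0 ?ltr0n.
exists d => // x x0 xd; rewrite norm_hX ?(ltW x0) //.
by apply: ler_wpM2r; [rewrite exprn_ge0 // ltW | case: (Hd x x0 xd)].
Qed.


Lemma poly_rate (f D : {poly F}) : D != 0 ->
  (forall e : F, 0 < e -> exists2 d : F, 0 < d &
     forall x : F, 0 < x -> x < d -> x <= 1 -> `|f.[x] / D.[x]| < e) ->
  exists C : F, 0 <= C /\ exists2 d : F, 0 < d &
     forall x : F, 0 < x -> x < d -> `|f.[x] / D.[x]| <= C * x.
Proof.
move=> /poly_decomp [r [s [s0 ->]]] Hlim.
have [->|f0] := eqVneq f 0.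
  by exists 0; split => //; exists 1 => // x _ _; rewrite horner0 mul0r normr0 mul0r.
have [m [h [h0 Ef]]] := poly_decomp f0; subst f.
have [dh dh0 Hh] := near0 h0; have [ds ds0 Hs] := near0 s0.
have [d1 d10 [d1h d1s]] := pos_min dh0 ds0.
have [d d0 [dd1 d1']] := pos_min d10 ltr01.
have s0p : 0 < `|s.[0]| by rewrite normr_gt0.
have h0p : 0 < `|h.[0]| by rewrite normr_gt0.
have two0 : (0 : F) < 2 by [].
have Hx : forall x, 0 < x -> x < d -> [/\ `|h.[0]| / 2 <= `|h.[x]| /\ `|h.[x]| <= `|h.[0]| * 2,
     `|s.[0]| / 2 <= `|s.[x]| /\ `|s.[x]| <= `|s.[0]| * 2 & x <= 1].
  move=> x x0 xd; have xd1 := lt_le_trans xd dd1; split.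
  - by apply: Hh => //; apply: lt_le_trans xd1 d1h.
  - by apply: Hs => //; apply: lt_le_trans xd1 d1s.
  - by apply: ltW; apply: lt_le_trans xd d1'.
have Hn : forall x, 0 < x -> `|(h * 'X^m).[x] / (s * 'X^r).[x]| =
    `|h.[x]| * x ^+ m / (`|s.[x]| * x ^+ r).
  by move=> x x0; rewrite normrM normfV !norm_hX // ltW.
case: (leqP m r) => mr.
  exfalso; set e0 := (`|h.[0]| / 2) / (`|s.[0]| * 2).
  have e0p : 0 < e0 by apply: divr_gt0; [apply: divr_gt0 | apply: mulr_gt0].
  have [d2 d20 Hd2] := Hlim e0 e0p.
  have [x x0 [xd xd2]] := pos_min d0 d20.
  have [y0 yx] := midf_lt x0; rewrite add0r in y0 yx.
  have [[Hh1 Hh2] [Hs1 Hs2] y1] := Hx _ y0 (lt_le_trans yx xd).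
  have sy : 0 < `|s.[x / 2]| by apply: lt_le_trans Hs1; apply: divr_gt0.
  have := Hd2 _ y0 (lt_le_trans yx xd2) y1; rewrite Hn //.
  have : e0 <= `|h.[x / 2]| / `|s.[x / 2]|.
    rewrite ler_pdivlMr //; apply: le_trans Hh1.
    apply: (le_trans (y := e0 * (`|s.[0]| * 2))).
      by apply: ler_wpM2l => //; apply: ltW.
    by rewrite divfK // gt_eqF // mulr_gt0.
  move=> He /(le_lt_trans (le_trans He (ratio_le (normr_ge0 _) sy y0 y1 mr))).
  by rewrite ltxx.
exists ((`|h.[0]| * 2) / (`|s.[0]| / 2)); split.
  by apply: ltW; apply: divr_gt0; [apply: mulr_gt0 | apply: divr_gt0].
exists d => // x x0 xd; have [[Hh1 Hh2] [Hs1 Hs2] x1] := Hx _ x0 xd.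
have sx : 0 < `|s.[x]| by apply: lt_le_trans Hs1; apply: divr_gt0.
rewrite Hn //; apply: le_trans (ratio_ge (normr_ge0 _) sx x0 x1 mr) _.
apply: ler_wpM2r; first exact: ltW.
apply: ler_pM => //; first by rewrite invr_ge0 ltW.
by rewrite lef_pV2 // posrE; apply: divr_gt0.
Qed.

End PolyAn.

Section Mx.
Variable F : numFieldType.
Variable n : nat.
Local Notation I := 'I_n.

Lemma flat3 (G : I -> I -> I -> F) :
  \sum_(a < n) \sum_(b < n) \sum_(c < n) G a b c =
  \sum_(t : (I * I) * I) G t.1.1 t.1.2 t.2.
Proof.
rewrite pair_big /=.
by rewrite (pair_big _ _ (fun p c => G p.1 p.2 c)).
Qed.

Lemma swap3 (G : I -> I -> I -> I -> I -> I -> F) :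
  \sum_(a < n) \sum_(b < n) \sum_(c < n) \sum_(i < n) \sum_(j < n) \sum_(k < n) G a b c i j k =
  \sum_(i < n) \sum_(j < n) \sum_(k < n) \sum_(a < n) \sum_(b < n) \sum_(c < n) G a b c i j k.
Proof.
transitivity (\sum_(t : (I * I) * I) \sum_(u : (I * I) * I)
   G t.1.1 t.1.2 t.2 u.1.1 u.1.2 u.2).
  rewrite (flat3 (fun a b c => \sum_(i < n) \sum_(j < n) \sum_(k < n) G a b c i j k)).
  by apply: eq_bigr => t _; rewrite flat3.
rewrite exchange_big.
rewrite (flat3 (fun i j k => \sum_(a < n) \sum_(b < n) \sum_(c < n) G a b c i j k)).
by apply: eq_bigr => u _; rewrite flat3.
Qed.

Lemma triple_prod (x y z : I -> F) w :
  (\sum_(a < n) x a) * (\sum_(b < n) y b) * (\sum_(c < n) z c) * w =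
  \sum_(a < n) \sum_(b < n) \sum_(c < n) (x a * y b * z c * w).
Proof.
rewrite -!mulrA big_distrl /=; apply: eq_bigr => a _.
rewrite big_distrl big_distrr /=; apply: eq_bigr => b _.
rewrite big_distrl big_distrr big_distrr /=; apply: eq_bigr => c _.
by rewrite !mulrA.
Qed.

Lemma invmxM (U V : 'M[F]_n) : U \in unitmx -> V \in unitmx ->
  invmx (U *m V) = invmx V *m invmx U.
Proof.
move=> Uu Vu; have UVu : U *m V \in unitmx by rewrite unitmx_mul Uu Vu.
have E : (U *m V) *m (invmx V *m invmx U) = 1%:M.
  by rewrite mulmxA -(mulmxA U) mulmxV // mulmx1 mulmxV.
by rewrite -[RHS](mulKmx UVu) E mulmx1.
Qed.

Lemma transformM (U V : 'M[F]_n) (c : sconst F n) i' j' k' :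
  U \in unitmx -> V \in unitmx ->
  transform (U *m V) c i' j' k' = transform V (transform U c) i' j' k'.
Proof.
move=> Uu Vu; rewrite /transform invmxM //.
transitivity (\sum_(i < n) \sum_(j < n) \sum_(k < n) \sum_(a < n) \sum_(b < n) \sum_(c0 < n)
  (V a i' * V b j' * invmx V k' c0) * (U i a * U j b * invmx U c0 k * c i j k)).
  apply: eq_bigr => i _; apply: eq_bigr => j _; apply: eq_bigr => k _.
  rewrite !mxE triple_prod.
  apply: eq_bigr => a _; apply: eq_bigr => b _; apply: eq_bigr => c0 _.
  by ring.
rewrite -swap3; apply: eq_bigr => a _; apply: eq_bigr => b _; apply: eq_bigr => c0 _.
rewrite !big_distrr /=; apply: eq_bigr => i _.
rewrite !big_distrr /=; apply: eq_bigr => j _.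
by rewrite !big_distrr /=.
Qed.

End Mx.


Section Unif.
Variable F : numFieldType.

Lemma unif_bound (T : finType) (P : T -> F -> Prop) :
  (forall t K K', K <= K' -> P t K -> P t K') ->
  (forall t, exists K, 0 <= K /\ P t K) -> exists K, 0 <= K /\ forall t, P t K.
Proof.
move=> mono H.
suff [K [K0 HK]] : exists K, 0 <= K /\ forall t, t \in enum T -> P t K.
  by exists K; split => // t; apply: HK; rewrite mem_enum.
elim: (enum T) => [|x s [K [K0 HK]]]; first by exists 0.
have [Kx [Kx0 HKx]] := H x.
exists (K + Kx); split; first by rewrite addr_ge0.
move=> t; rewrite in_cons => /orP [/eqP ->|ts].
  by apply: mono HKx; rewrite lerDr.
by apply: mono (HK t ts); rewrite lerDl.
Qed.

Lemma unif_delta (T : finType) (Q : T -> F -> Prop) :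
  (forall t d d', 0 < d' -> d' <= d -> Q t d -> Q t d') ->
  (forall t, exists2 d, 0 < d & Q t d) -> exists2 d, 0 < d & forall t, Q t d.
Proof.
move=> mono H.
suff [d d0 Hd] : exists2 d, 0 < d & forall t, t \in enum T -> Q t d.
  by exists d => // t; apply: Hd; rewrite mem_enum.
elim: (enum T) => [|x s [d d0 Hd]]; first by exists 1.
have [dx dx0 Hdx] := H x.
have [d' d'0 [d'1 d'2]] := pos_min d0 dx0.
exists d' => // t; rewrite in_cons => /orP [/eqP ->|ts].
  exact: mono Hdx.
exact: mono (Hd t ts).
Qed.

Lemma ler_pM4 (a b c d a' b' c' d' : F) : 0 <= a -> 0 <= b -> 0 <= c -> 0 <= d ->
  a <= a' -> b <= b' -> c <= c' -> d <= d' -> a * b * c * d <= a' * b' * c' * d'.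
Proof.
move=> a0 b0 c0 d0 aa bb cc dd.
apply: ler_pM => //; first by rewrite !mulr_ge0.
apply: ler_pM => //; first by rewrite !mulr_ge0.
exact: ler_pM.
Qed.

Variable n : nat.
Local Notation I := 'I_n.

Lemma evalE (P : 'M[{poly F}]_n) x : poly_mx_eval P x = map_mx (horner_eval x) P.
Proof. by apply/matrixP => i j; rewrite !mxE. Qed.

Lemma detE (P : 'M[{poly F}]_n) x : \det (poly_mx_eval P x) = (\det P).[x].
Proof. by rewrite evalE det_map_mx. Qed.

Lemma adjE (P : 'M[{poly F}]_n) x i j : \adj (poly_mx_eval P x) i j = (\adj P i j).[x].
Proof. by rewrite evalE -map_mx_adj mxE. Qed.

Lemma invE (P : 'M[{poly F}]_n) x i j : poly_mx_eval P x \in unitmx ->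
  invmx (poly_mx_eval P x) i j = (\adj P i j).[x] / (\det P).[x].
Proof. by move=> H; rewrite /invmx H mxE adjE detE mulrC. Qed.

Lemma det_neq0 (P : 'M[{poly F}]_n) x : poly_mx_eval P x \in unitmx -> (\det P).[x] != 0.
Proof. by rewrite unitmxE unitfE detE. Qed.

Lemma eval_cont (P : 'M[{poly F}]_n) (eps0 : F) : 0 < eps0 <= 1 -> forall e : F, 0 < e ->
  exists2 d : F, 0 < d & forall eps : F, 0 < eps <= 1 -> `|eps - eps0| < d ->
    forall a b, `|poly_mx_eval P eps a b - poly_mx_eval P eps0 a b| < e.
Proof.
move=> /andP [e00 e01] e e0.
have [K [K0 HK]] : exists K, 0 <= K /\ forall t : (I * I)%type,
  forall x y : F, `|x| <= 1 -> `|y| <= 1 ->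
     `|(P t.1 t.2).[x] - (P t.1 t.2).[y]| <= K * `|x - y|.
  apply: unif_bound.
    move=> t K K1 KK H x y hx hy; apply: le_trans (H x y hx hy) _.
    exact: ler_wpM2r.
  move=> t; have [M [M0 [_ HL]]] := poly_bound_lip (P t.1 t.2).
  by exists M.
have K1 : 0 < K + 1 by rewrite ltr_wpDl.
exists (e / (K + 1)); first by rewrite divr_gt0.
move=> eps /andP [ep0 ep1] Hd a b; rewrite !mxE.
have H := HK (a, b) eps eps0.
rewrite (ger0_norm (ltW ep0)) (ger0_norm (ltW e00)) in H.
move: (H ep1 e01) => {}H.
apply: le_lt_trans H _.
apply: (le_lt_trans (y := (K + 1) * `|eps - eps0|)).
  by rewrite ler_wpM2r // lerDl.
by rewrite mulrC -ltr_pdivlMr.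
Qed.

Definition Npoly (P : 'M[{poly F}]_n) (g : sconst F n) i' j' k' : {poly F} :=
  \sum_(i < n) \sum_(j < n) \sum_(k < n) P i i' * P j j' * \adj P k' k * (g i j k)%:P.

Lemma transform_rat (P : 'M[{poly F}]_n) g x i' j' k' : poly_mx_eval P x \in unitmx ->
  transform (poly_mx_eval P x) g i' j' k' = (Npoly P g i' j' k').[x] / (\det P).[x].
Proof.
move=> H; have Hd := det_neq0 H; move: Hd; set dd := (\det P).[x] => Hd.
rewrite /transform /Npoly !horner_sum mulr_suml; apply: eq_bigr => i _.
rewrite horner_sum mulr_suml; apply: eq_bigr => j _.
rewrite horner_sum mulr_suml; apply: eq_bigr => k _.
rewrite invE // -/dd !hornerM hornerC.
set a := (\adj P k' k).[x].
rewrite !mxE.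
by field.
Qed.

End Unif.


Section Main.
Variable F : numFieldType.

Lemma transform_sub n (U : 'M[F]_n) (c1 c2 : sconst F n) i' j' k' :
  transform U c1 i' j' k' - transform U c2 i' j' k' =
  transform U (fun a b c => c1 a b c - c2 a b c) i' j' k'.
Proof.
rewrite /transform -sumrB; apply: eq_bigr => i _.
rewrite -sumrB; apply: eq_bigr => j _.
rewrite -sumrB; apply: eq_bigr => k _.
by rewrite mulrBr.
Qed.

Theorem main_gen : poly_contraction_transitive F.
Proof.
move=> n g gh gt _ _ _ [Ph [H1u H1c H1l]] [Pt [H2u H2c H2l]].
have one1 : (0 : F) < 1 <= (1 : F) by rewrite ltr01 lexx.
have detPt : \det Pt != 0.
  by apply: contraNneq (det_neq0 (H2u 1 one1)) => ->; rewrite horner0.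
have detPh : \det Ph != 0.
  by apply: contraNneq (det_neq0 (H1u 1 one1)) => ->; rewrite horner0.
have [p [c [c0 [dB dB0 HdB]]]] := poly_lower detPt.
have [MB [MB0 HMB]] : exists K, 0 <= K /\ forall t : ('I_n * 'I_n)%type,
   forall x : F, `|x| <= 1 -> `|(Pt t.1 t.2).[x]| <= K.
  apply: unif_bound; first by move=> t K K' KK H x hx; apply: le_trans (H x hx) KK.
  by move=> t; have [M [M0 [HM _]]] := poly_bound_lip (Pt t.1 t.2); exists M.
have [MA [MA0 HMA]] : exists K, 0 <= K /\ forall t : ('I_n * 'I_n)%type,
   forall x : F, `|x| <= 1 -> `|(\adj Pt t.1 t.2).[x]| <= K.
  apply: unif_bound; first by move=> t K K' KK H x hx; apply: le_trans (H x hx) KK.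
  by move=> t; have [M [M0 [HM _]]] := poly_bound_lip (\adj Pt t.1 t.2); exists M.
pose fp (t : ('I_n * 'I_n) * 'I_n) :=
  Npoly Ph g t.1.1 t.1.2 t.2 - (gh t.1.1 t.1.2 t.2)%:P * \det Ph.
have fpE : forall t x, 0 < x <= 1 ->
    (fp t).[x] / (\det Ph).[x] = transform (poly_mx_eval Ph x) g t.1.1 t.1.2 t.2 - gh t.1.1 t.1.2 t.2.
  move=> t x hx; have Hu := H1u x hx; have Hd := det_neq0 Hu.
  by rewrite transform_rat // /fp hornerD hornerN hornerM hornerC mulrBl mulfK.
have [C [C0 HC]] : exists C, 0 <= C /\ forall t : (('I_n * 'I_n) * 'I_n)%type,
    exists2 d : F, 0 < d & forall x : F, 0 < x -> x < d ->
      `|(fp t).[x] / (\det Ph).[x]| <= C * x.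
  apply: unif_bound.
    move=> t K K' KK [d d0 H]; exists d => // x x0 xd.
    by apply: le_trans (H x x0 xd) _; apply: ler_wpM2r => //; apply: ltW.
  move=> t; apply: poly_rate => // e e0.
  have [d d0 Hd] := H1l e e0; exists d => // x x0 xd x1.
  have hx : 0 < x <= 1 by rewrite x0 x1.
  by rewrite fpE //; apply: Hd => //; rewrite x0.
have [dE dE0 HdE] : exists2 d : F, 0 < d & forall t : (('I_n * 'I_n) * 'I_n)%type,
    forall x : F, 0 < x -> x < d -> `|(fp t).[x] / (\det Ph).[x]| <= C * x.
  apply: unif_delta; last exact: HC.
  move=> t d d' d'0 dd H x x0 xd; apply: H => //; exact: lt_le_trans xd dd.
pose q := p.+1.
pose Pc := map_mx (fun r => r \Po 'X^q) Ph *m Pt.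
have evPc : forall x, poly_mx_eval Pc x = poly_mx_eval Ph (x ^+ q) *m poly_mx_eval Pt x.
  move=> x; apply/matrixP => i j; rewrite !mxE horner_sum; apply: eq_bigr => k _.
  by rewrite !mxE hornerM horner_comp hornerXn.
have xq : forall x : F, 0 < x <= 1 -> 0 < x ^+ q <= 1.
  move=> x /andP [x0 x1]; by rewrite exprn_gt0 // exprn_ile1 // ltW.
exists Pc; split.
- by move=> eps he; rewrite evPc unitmx_mul H1u ?xq // H2u.
- exact: eval_cont.
move=> e e0.
have e20 : 0 < e / 2 by rewrite divr_gt0.
have [d2 d20 Hd2] := H2l (e / 2) e20.
pose K := \sum_(i < n) \sum_(j < n) \sum_(k < n) (MB * MB * (MA / c) * C).
have K0 : 0 <= K.
  apply: sumr_ge0 => i _; apply: sumr_ge0 => j _; apply: sumr_ge0 => k _.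
  by rewrite !mulr_ge0 // invr_ge0 ltW.
have K1 : 0 < K + 1 by rewrite ltr_wpDl.
have [da da0 [da1 da2]] := pos_min d20 dB0.
have [db db0 [db1 db2]] := pos_min da0 dE0.
have [d d0 [dd1 dd2]] := pos_min db0 (divr_gt0 e20 K1).
exists d => // x /andP [_ xd] /andP [x0 x1] i' j' k'.
have xd2 : x < d2 by apply: lt_le_trans xd (le_trans dd1 (le_trans db1 da1)).
have xdB : x < dB by apply: lt_le_trans xd (le_trans dd1 (le_trans db1 da2)).
have xdE : x < dE by apply: lt_le_trans xd (le_trans dd1 db2).
have hx : 0 < x <= 1 by rewrite x0 x1.
have hxq := xq x hx.
rewrite evPc transformM ?H1u ?H2u //.
set Bx := poly_mx_eval Pt x.
have -> : transform Bx (transform (poly_mx_eval Ph (x ^+ q)) g) i' j' k' - gt i' j' k' =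
   (transform Bx gh i' j' k' - gt i' j' k') +
   (transform Bx (transform (poly_mx_eval Ph (x ^+ q)) g) i' j' k' - transform Bx gh i' j' k').
  by ring.
rewrite transform_sub.
rewrite [X in _ < X](splitr e).
apply: le_lt_trans (ler_normD _ _) _.
apply: ltr_leD; first by apply: Hd2 => //; rewrite x0.
have xn1 : `|x| <= 1 by rewrite ger0_norm // ltW.
have xp0 : 0 < x ^+ p by rewrite exprn_gt0.
have cxp : 0 < c * x ^+ p by rewrite mulr_gt0.
apply: (le_trans (y := K * x)); last first.
  apply: (le_trans (y := (K + 1) * x)); first by apply: ler_wpM2r; [exact: ltW | rewrite lerDl].
  rewrite mulrC -ler_pdivlMr //; exact: le_trans (ltW xd) dd2.
rewrite /transform /K !mulr_suml.
apply: le_trans (ler_norm_sum _ _ _) _; apply: ler_sum => i _.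
apply: le_trans (ler_norm_sum _ _ _) _; apply: ler_sum => j _.
apply: le_trans (ler_norm_sum _ _ _) _; apply: ler_sum => k _.
rewrite !normrM.
have Bb : forall a b, `|Bx a b| <= MB by move=> a b; rewrite mxE; apply: (HMB (a, b)).
have Ib : `|invmx Bx k' k| <= MA / (c * x ^+ p).
  rewrite invE ?H2u // normrM normfV.
  apply: ler_pM => //; first by rewrite invr_ge0.
    by apply: (HMA (k', k)).
  rewrite lef_pV2 // ?posrE ?normr_gt0 ?(det_neq0 (H2u x hx)) //.
  by apply: HdB.
have Eb : `|transform (poly_mx_eval Ph (x ^+ q)) g i j k - gh i j k| <= C * x ^+ q.
  rewrite -(fpE ((i, j), k)) //; apply: HdE; first by case/andP: hxq.
  by apply: le_lt_trans xdE; apply: expr_le_x => //; apply: ltW.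
apply: le_trans (ler_pM4 _ _ _ _ (Bb _ _) (Bb _ _) Ib Eb) _ => //.
have xne : x != 0 by rewrite gt_eqF.
have cne : c != 0 by rewrite gt_eqF.
rewrite /q exprS le_eqVlt; apply/orP; left; apply/eqP.
have xpne : x ^+ p != 0 by rewrite gt_eqF.
by field; rewrite cne xpne.
Qed.

End Main.

Theorem mainTheorem13 (R : realType) :
  poly_contraction_transitive R /\ poly_contraction_transitive R[i].
Proof. by split; apply: main_gen. Qed.
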